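(* Fix a finite alphabet $\mathcal{X}$, integers $M_1\ge M_2\ge1$, reals $\alpha,\beta>0$ and $\lambda_1,\lambda_2>0$; let $\xi_N=\lceil\alpha N\rceil$, $\chi_N=\lceil\beta N\rceil$. For each $N$ consider the one-step fixed-length test $\Phi_{\mathrm{FL},N}^{\mathrm{uk}}$ which observes $(\mathbf{X}^{\xi_N},\mathbf{Y}^{\chi_N})$, forms for each $(h,t)\in\mathcal{M}$ the events $\mathcal{B}_{h,t}^N=\{\mathrm{S}_t^h(\mathbf{X}^{\xi_N},\mathbf{Y}^{\chi_N})\le\lambda_1\}\cap\{\min_{\bar t\in[T_h],\bar t\ne t}\mathrm{S}_{\bar t}^h(\mathbf{X}^{\xi_N},\mathbf{Y}^{\chi_N})>\lambda_2\}$, and decides $\mathrm{H}_l^K$ if $\mathcal{B}_{K,l}^N\cap\bigcap_{(h,t)\in\mathcal{M},(h,t)\ne(K,l)}(\mathcal{B}_{h,t}^N)^c$ occurs for some $(K,l)\in\mathcal{M}$, and $\mathrm{H}_{\mathrm{r}}$ otherwise. Then: (i) for every $(P^{M_1},Q^{M_2})\in\mathcal{P}_0$, $\liminf_{N\to\infty}-\frac1N\log\eta(\Phi_{\mathrm{FL},N}^{\mathrm{uk}}|P^{M_1},Q^{M_2})\ge E_{\mathrm{r}}(\lambda_1,P^{M_1},Q^{M_2})$; (ii) for every $(K,l)\in\mathcal{M}$ and every $(P^{M_1},Q^{M_2})\in\mathcal{P}_l^K$, $\liminf_{N\to\infty}-\frac1N\log\bar\beta(\Phi_{\mathrm{FL},N}^{\mathrm{uk}}|P^{M_1},Q^{M_2})\ge\min\{G(\lambda_1,P^{M_1},Q^{M_2}),\lambda_2\}$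 and $\liminf_{N\to\infty}-\frac1N\log\zeta(\Phi_{\mathrm{FL},N}^{\mathrm{uk}}|P^{M_1},Q^{M_2})\ge\min\{\lambda_1,\lambda_2,G(\lambda_1,P^{M_1},Q^{M_2}),F(\lambda_2,P^{M_1},Q^{M_2})\}$.
   Context: Model: $\mathcal{P}(\mathcal{X})$ is the set of distributions on $\mathcal{X}$. For $i\in[M_1]$, $X_i^{\xi_N}=(X_{i,1},\dots,X_{i,\xi_N})$ i.i.d. $P_i$; for $j\in[M_2]$, $Y_j^{\chi_N}$ i.i.d. $Q_j$; all independent; within each database distributions are distinct. For $K\in[M_2]$, a $K$-match is a set of $K$ pairs in $[M_1]\times[M_2]$ with no two sharing a first or second coordinate; there are $T_K=\binom{M_1}{K}\binom{M_2}{K}K!$, enumerated $\mathcal{M}_1^K,\dots,\mathcal{M}_{T_K}^K$; $\mathcal{M}:=\{(h,t):h\in[M_2],t\in[T_h]\}$. Hypothesis $\mathrm{H}_l^K$: $(P^{M_1},Q^{M_2})\in\mathcal{P}_l^K:=\{\tilde P_i=\tilde Q_j\text{ iff }(i,j)\in\mathcal{M}_l^K\}$ (probability $\mathbb{P}_l^K$); null hypothesis $\mathrm{H}_{\mathrm{r}}$: $(P^{M_1},Q^{M_2})\in\mathcal{P}_0:=\{\tilde P_i\ne\tilde Q_j\ \forall i,j\}$ (probability $\mathbb{P}_{\mathrm{r}}$). Error probabilities of a test with decision $\phi$: under $\mathrm{H}_l^K$, mismatch $\bar\beta=\mathbb{P}_l^K\{\phi\notin\{\mathrm{H}_l^K,\mathrm{H}_{\mathrm{r}}\}\}$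 and false reject $\zeta=\mathbb{P}_l^K\{\phi=\mathrm{H}_{\mathrm{r}}\}$; under $\mathrm{H}_{\mathrm{r}}$, false alarm $\eta=\mathbb{P}_{\mathrm{r}}\{\phi\ne\mathrm{H}_{\mathrm{r}}\}$. Notation: $\hat T_{x^n}$ is the type of $x^n$; $D$ is KL divergence; $R_{\alpha,\beta}^{P,Q}=\frac{\alpha P+\beta Q}{\alpha+\beta}$; $\mathrm{GJS}(P,Q,\alpha,\beta)=\alpha D(P\|R_{\alpha,\beta}^{P,Q})+\beta D(Q\|R_{\alpha,\beta}^{P,Q})$; $\mathrm{G}_t^h(P^{M_1},Q^{M_2},\alpha,\beta)=\sum_{(i,j)\in\mathcal{M}_t^h}\mathrm{GJS}(P_i,Q_j,\alpha,\beta)$; $\mathrm{S}_t^h(\mathbf{x}^{\xi_N},\mathbf{y}^{\chi_N})=\mathrm{G}_t^h((\hat T_{x_i^{\xi_N}})_i,(\hat T_{y_j^{\chi_N}})_j,\alpha,\beta)$; $E(P^{M_1},Q^{M_2},\Omega^{M_1},\Psi^{M_2},\alpha,\beta)=\sum_i\alpha D(\Omega_i\|P_i)+\sum_j\beta D(\Psi_j\|Q_j)$. $E_{\mathrm{r}}(\lambda,P^{M_1},Q^{M_2})=\min_{(h,t)\in\mathcal{M}}\min_{(\Omega^{M_1},\Psi^{M_2})\in\mathcal{P}(\mathcal{X})^{M_1+M_2}:\mathrm{G}_t^h(\Omega^{M_1},\Psi^{M_2},\alpha,\beta)\le\lambda}E(\cdot)$. For $(P^{M_1},Q^{M_2})\in\mathcal{P}_l^K$: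 $G(\lambda,P^{M_1},Q^{M_2})=\min_{(h,t)\in\mathcal{M}:h>K}\min_{(\Omega^{M_1},\Psi^{M_2}):\mathrm{G}_t^h(\Omega^{M_1},\Psi^{M_2},\alpha,\beta)\le\lambda}E(P^{M_1},Q^{M_2},\Omega^{M_1},\Psi^{M_2},\alpha,\beta)$ (minimum over an empty set is $+\infty$), and $F(\lambda,P^{M_1},Q^{M_2})=\min_{(t_1,t_2)\in[T_K]^2,t_1\ne t_2}\min_{(\Omega^{M_1},\Psi^{M_2}):\mathrm{G}_{t_1}^K(\Omega^{M_1},\Psi^{M_2},\alpha,\beta)\le\lambda,\ \mathrm{G}_{t_2}^K(\Omega^{M_1},\Psi^{M_2},\alpha,\beta)\le\lambda}E(P^{M_1},Q^{M_2},\Omega^{M_1},\Psi^{M_2},\alpha,\beta)$. *)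

(* Defs.v *)
From HB Require Import structures.
From mathcomp Require Import all_boot all_order all_algebra.
From mathcomp Require Import all_classical all_reals all_analysis.
Set Implicit Arguments. Unset Strict Implicit. Unset Printing Implicit Defensive.
Import Order.TTheory GRing.Theory Num.Theory.
Local Open Scope ring_scope.

Definition is_dist (R : realType) (X : finType) (P : {ffun X -> R}) : Prop :=
  (forall a, 0 <= P a) /\ \sum_(a : X) P a = 1.

Definition KL (R : realType) (X : finType) (P Q : {ffun X -> R}) : \bar R :=
  if [exists a, (0 < P a) && (Q a == 0)] then +oo%E
  else (\sum_(a : X) (if P a == 0 then 0 else P a * ln (P a / Q a)))%:E.

Definition mixd (R : realType) (X : finType) (P Q : {ffun X -> R}) (alpha beta : R)
  : {ffun X -> R} := [ffun a => (alpha * P a + beta * Q a) / (alpha + beta)].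

Definition GJS (R : realType) (X : finType) (P Q : {ffun X -> R}) (alpha beta : R)
  : \bar R :=
  (alpha%:E * KL P (mixd P Q alpha beta) + beta%:E * KL Q (mixd P Q alpha beta))%E.

(** A K-match is a match of cardinality K. The set
    \mathcal{M} of all (h,t), h in [M2], is in bijection with the nonempty matches. *)
Definition is_match (M1 M2 : nat) (m : {set 'I_M1 * 'I_M2}) : bool :=
  [forall p in m, forall q in m, ((p.1 == q.1) || (p.2 == q.2)) ==> (p == q)].

Definition in_calM (M1 M2 : nat) (m : {set 'I_M1 * 'I_M2}) : bool :=
  is_match m && (0 < #|m|)%N.

Definition Gm (R : realType) (X : finType) (M1 M2 : nat) (m : {set 'I_M1 * 'I_M2})
  (P : 'I_M1 -> {ffun X -> R}) (Q : 'I_M2 -> {ffun X -> R}) (alpha beta : R) : \bar R :=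
  (\sum_(p in m) GJS (P p.1) (Q p.2) alpha beta)%E.

Definition Eexp (R : realType) (X : finType) (M1 M2 : nat)
  (P : 'I_M1 -> {ffun X -> R}) (Q : 'I_M2 -> {ffun X -> R})
  (Om : 'I_M1 -> {ffun X -> R}) (Ps : 'I_M2 -> {ffun X -> R}) (alpha beta : R)
  : \bar R :=
  (\sum_(i < M1) alpha%:E * KL (Om i) (P i) + \sum_(j < M2) beta%:E * KL (Ps j) (Q j))%E.

(** E_r(lambda, P, Q) (the minimum is written as an infimum; it is attained). *)
Definition Er (R : realType) (X : finType) (M1 M2 : nat) (alpha beta lambda : R)
  (P : 'I_M1 -> {ffun X -> R}) (Q : 'I_M2 -> {ffun X -> R}) : \bar R :=
  ereal_inf [set e | exists (m : {set 'I_M1 * 'I_M2}) Om Ps,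
     [/\ in_calM m, (forall i, is_dist (Om i)), (forall j, is_dist (Ps j)),
         (Gm m Om Ps alpha beta <= lambda%:E)%E & e = Eexp P Q Om Ps alpha beta]].

(** G(lambda, P, Q) for (P,Q) in P_l^K with K = #|m0|; inf of the empty set is +oo. *)
Definition Gfun (R : realType) (X : finType) (M1 M2 : nat) (alpha beta lambda : R)
  (K : nat) (P : 'I_M1 -> {ffun X -> R}) (Q : 'I_M2 -> {ffun X -> R}) : \bar R :=
  ereal_inf [set e | exists (m : {set 'I_M1 * 'I_M2}) Om Ps,
     [/\ in_calM m && (K < #|m|)%N, (forall i, is_dist (Om i)), (forall j, is_dist (Ps j)),
         (Gm m Om Ps alpha beta <= lambda%:E)%E & e = Eexp P Q Om Ps alpha beta]].

Definition Ffun (R : realType) (X : finType) (M1 M2 : nat) (alpha beta lambda : R)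
  (K : nat) (P : 'I_M1 -> {ffun X -> R}) (Q : 'I_M2 -> {ffun X -> R}) : \bar R :=
  ereal_inf [set e | exists (m1 m2 : {set 'I_M1 * 'I_M2}) Om Ps,
     [/\ [&& is_match m1, is_match m2, #|m1| == K, #|m2| == K & m1 != m2],
         (forall i, is_dist (Om i)) /\ (forall j, is_dist (Ps j)),
         (Gm m1 Om Ps alpha beta <= lambda%:E)%E /\ (Gm m2 Om Ps alpha beta <= lambda%:E)%E
       & e = Eexp P Q Om Ps alpha beta]].

Definition sampleX (X : finType) (M1 n1 : nat) := {ffun 'I_M1 -> {ffun 'I_n1 -> X}}.
Definition sampleY (X : finType) (M2 n2 : nat) := {ffun 'I_M2 -> {ffun 'I_n2 -> X}}.

Definition etype (R : realType) (X : finType) (n : nat) (x : {ffun 'I_n -> X})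
  : {ffun X -> R} := [ffun a => #|[set k | x k == a]|%:R / n%:R].

Definition Sstat (R : realType) (X : finType) (M1 M2 n1 n2 : nat) (alpha beta : R)
  (m : {set 'I_M1 * 'I_M2}) (x : sampleX X M1 n1) (y : sampleY X M2 n2) : \bar R :=
  Gm m (fun i => etype R (x i)) (fun j => etype R (y j)) alpha beta.

Definition Bev (R : realType) (X : finType) (M1 M2 n1 n2 : nat) (alpha beta l1 l2 : R)
  (m : {set 'I_M1 * 'I_M2}) (x : sampleX X M1 n1) (y : sampleY X M2 n2) : Prop :=
  (Sstat alpha beta m x y <= l1%:E)%E /\
  (forall m' : {set 'I_M1 * 'I_M2}, is_match m' -> #|m'| = #|m| -> m' <> m ->
      (l2%:E < Sstat alpha beta m' x y)%E).

Definition decides (R : realType) (X : finType) (M1 M2 n1 n2 : nat) (alpha beta l1 l2 : R)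
  (m : {set 'I_M1 * 'I_M2}) (x : sampleX X M1 n1) (y : sampleY X M2 n2) : Prop :=
  Bev alpha beta l1 l2 m x y /\
  (forall m' : {set 'I_M1 * 'I_M2}, in_calM m' -> m' <> m -> ~ Bev alpha beta l1 l2 m' x y).

Definition sprob (R : realType) (X : finType) (M1 M2 n1 n2 : nat)
  (P : 'I_M1 -> {ffun X -> R}) (Q : 'I_M2 -> {ffun X -> R})
  (A : sampleX X M1 n1 -> sampleY X M2 n2 -> Prop) : R :=
  \sum_(x : sampleX X M1 n1) \sum_(y : sampleY X M2 n2)
     (if `[< A x y >] then
        (\prod_(i < M1) \prod_(k < n1) P i (x i k)) *
        (\prod_(j < M2) \prod_(k < n2) Q j (y j k))
      else 0).

Definition ceiln (R : realType) (a : R) (N : nat) : nat := `|Num.ceil (a * N%:R)|%N.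

Definition expo (R : realType) (p : R) (N : nat) : \bar R :=
  if p == 0 then +oo%E else ((- ln p) / N%:R)%:E.

Definition eta_err (R : realType) (X : finType) (M1 M2 : nat) (alpha beta l1 l2 : R)
  (P : 'I_M1 -> {ffun X -> R}) (Q : 'I_M2 -> {ffun X -> R}) (N : nat) : R :=
  sprob (n1 := ceiln alpha N) (n2 := ceiln beta N) P Q
    (fun x y => exists m, in_calM m /\ decides alpha beta l1 l2 m x y).

Definition beta_err (R : realType) (X : finType) (M1 M2 : nat) (alpha beta l1 l2 : R)
  (m0 : {set 'I_M1 * 'I_M2})
  (P : 'I_M1 -> {ffun X -> R}) (Q : 'I_M2 -> {ffun X -> R}) (N : nat) : R :=
  sprob (n1 := ceiln alpha N) (n2 := ceiln beta N) P Q
    (fun x y => exists m, [/\ in_calM m, m <> m0 & decides alpha beta l1 l2 m x y]).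

Definition zeta_err (R : realType) (X : finType) (M1 M2 : nat) (alpha beta l1 l2 : R)
  (P : 'I_M1 -> {ffun X -> R}) (Q : 'I_M2 -> {ffun X -> R}) (N : nat) : R :=
  sprob (n1 := ceiln alpha N) (n2 := ceiln beta N) P Q
    (fun x y => ~ exists m, in_calM m /\ decides alpha beta l1 l2 m x y).

Definition in_P0 (R : realType) (X : finType) (M1 M2 : nat)
  (P : 'I_M1 -> {ffun X -> R}) (Q : 'I_M2 -> {ffun X -> R}) : Prop :=
  forall i j, P i <> Q j.

Definition in_Pm (R : realType) (X : finType) (M1 M2 : nat) (m : {set 'I_M1 * 'I_M2})
  (P : 'I_M1 -> {ffun X -> R}) (Q : 'I_M2 -> {ffun X -> R}) : Prop :=
  forall i j, P i = Q j <-> (i, j) \in m.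

Definition valid_model (R : realType) (X : finType) (M1 M2 : nat)
  (P : 'I_M1 -> {ffun X -> R}) (Q : 'I_M2 -> {ffun X -> R}) : Prop :=
  [/\ (forall i, is_dist (P i)), (forall j, is_dist (Q j)),
      injective P & injective Q].

(* Main.v *)
Require Import Defs.
From HB Require Import structures.
From mathcomp Require Import all_boot all_order all_algebra.
From mathcomp Require Import all_classical all_reals all_analysis.
From mathcomp Require Import lra ring.
Import Order.TTheory GRing.Theory Num.Theory.
Set Implicit Arguments. Unset Strict Implicit. Unset Printing Implicit Defensive.
Local Open Scope ring_scope.
Definition kterm (R : realType) (X : finType) (T P : {ffun X -> R}) (a : X) : R :=
  if T a == 0 then 0 else T a * ln (T a / P a).

Lemma KLE (R : realType) (X : finType) (T P : {ffun X -> R}) :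
  KL T P = if [exists a, (0 < T a) && (P a == 0)] then +oo%E
           else (\sum_a kterm T P a)%:E.
Proof. by []. Qed.

Lemma ln_le_sub1 (R : realType) (x : R) : 0 < x -> ln x <= x - 1.
Proof.
move=> x0; have := @le_ln1Dx R (x - 1).
rewrite [1 + _]addrC subrK; apply; lra.
Qed.

Lemma kterm_ge (R : realType) (X : finType) (T P : {ffun X -> R}) a :
  0 <= T a -> 0 <= P a -> (0 < T a -> 0 < P a) -> T a - P a <= kterm T P a.
Proof.
move=> T0 P0 TP; rewrite /kterm; have [->|Tn0] := eqVneq (T a) 0.
  by rewrite sub0r oppr_le0.
have Tp : 0 < T a by rewrite lt_def Tn0.
have Pp := TP Tp.
have := ln_le_sub1 (divr_gt0 Pp Tp).
rewrite -[P a / T a]invf_div lnV ?posrE ?divr_gt0 // => h.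
have : T a * (1 - P a / T a) <= T a * ln (T a / P a).
  rewrite ler_pM2l //; lra.
by rewrite mulrBr mulr1 mulrCA divff ?mulr1.
Qed.

Lemma gibbs (R : realType) (X : finType) (T P : {ffun X -> R}) :
  is_dist T -> (forall a, 0 <= P a) -> \sum_a P a <= 1 ->
  (forall a, 0 < T a -> 0 < P a) -> 0 <= \sum_a kterm T P a.
Proof.
case=> T0 T1 P0 P1 TP.
have h1 : 0 <= \sum_a (T a - P a) by rewrite sumrB T1 subr_ge0.
apply: (le_trans h1).
by apply: ler_sum => a _; exact: kterm_ge (T0 a) (P0 a) (@TP a).
Qed.

Lemma KL_ge0 (R : realType) (X : finType) (T P : {ffun X -> R}) :
  is_dist T -> is_dist P -> (0 <= KL T P)%E.
Proof.
move=> dT [P0 P1]; rewrite KLE; case: ifPn => // /existsPn h.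
rewrite lee_fin; apply: gibbs => //; first by rewrite P1.
move=> a Ta; move: (h a); rewrite Ta /= lt_def => ->; exact: P0.
Qed.

Lemma kterm_eq (R : realType) (X : finType) (T P : {ffun X -> R}) a :
  0 <= T a -> (0 < T a -> 0 < P a) -> kterm T P a = T a * (ln (T a) - ln (P a)).
Proof.
move=> T0 TP; rewrite /kterm; have [->|Tn0] := eqVneq (T a) 0; first by rewrite mul0r.
have Tp : 0 < T a by rewrite lt_def Tn0.
by rewrite ln_div ?posrE // TP.
Qed.

Lemma ne_ninfty_ge0 (R : realType) (x : \bar R) : (0 <= x)%E -> x != -oo%E.
Proof. by case: x. Qed.

Lemma mixd_dist (R : realType) (X : finType) (A B : {ffun X -> R}) (al be : R) :
  0 < al -> 0 < be -> is_dist A -> is_dist B -> is_dist (mixd A B al be).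
Proof.
move=> a0 b0 [A0 A1] [B0 B1]; split.
  move=> a; rewrite /mixd ffunE; apply: divr_ge0; last by rewrite ltW // addr_gt0.
  by rewrite addr_ge0 // mulr_ge0 // ltW.
rewrite /mixd (eq_bigr (fun a => (al * A a + be * B a) / (al + be))); last by move=> a _; rewrite ffunE.
rewrite -mulr_suml big_split /= -!mulr_sumr A1 B1 !mulr1 divff //.
by rewrite gt_eqF // addr_gt0.
Qed.

Lemma gjs_le (R : realType) (X : finType) (A B P : {ffun X -> R}) (al be : R) :
  0 < al -> 0 < be -> is_dist A -> is_dist B -> is_dist P ->
  (GJS A B al be <= al%:E * KL A P + be%:E * KL B P)%E.
Proof.
move=> a0 b0 dA dB dP.
have KA := KL_ge0 dA dP; have KB := KL_ge0 dB dP.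
have aKA : (0 <= al%:E * KL A P)%E by rewrite mule_ge0 // lee_fin ltW.
have bKB : (0 <= be%:E * KL B P)%E by rewrite mule_ge0 // lee_fin ltW.
case: (boolP [exists a, (0 < A a) && (P a == 0)]) => [exA|/existsPn nA].
  rewrite KLE exA gt0_muley ?lte_fin // addye ?ne_ninfty_ge0 //; exact: leey.
case: (boolP [exists a, (0 < B a) && (P a == 0)]) => [exB|/existsPn nB].
  rewrite (KLE B) exB gt0_muley ?lte_fin // addey ?ne_ninfty_ge0 //; exact: leey.
have [A0 _] := dA; have [B0 _] := dB; have [P0 P1] := dP.
set Rm := mixd A B al be.
have dR := mixd_dist a0 b0 dA dB.
have [R0 _] := dR.
have RmE a : (al + be) * Rm a = al * A a + be * B a.
  rewrite /Rm /mixd ffunE mulrC -mulrA mulVf ?mulr1 //.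
  by rewrite gt_eqF // addr_gt0.
have AP a : 0 < A a -> 0 < P a.
  by move=> h; move: (nA a); rewrite h /= lt_def => ->; exact: P0.
have BP a : 0 < B a -> 0 < P a.
  by move=> h; move: (nB a); rewrite h /= lt_def => ->; exact: P0.
have RP a : 0 < Rm a -> 0 < P a.
  move=> h; case: (ltrgt0P (A a)) => [Ap|An|Ae]; first exact: AP.
    by have := A0 a; rewrite leNgt An.
  case: (ltrgt0P (B a)) => [Bp|Bn|Be]; first exact: BP.
    by have := B0 a; rewrite leNgt Bn.
  by move: (RmE a); rewrite Ae Be !mulr0 addr0 => /eqP; rewrite mulf_eq0 gt_eqF ?addr_gt0 //= gt_eqF.
have AR a : 0 < A a -> 0 < Rm a.
  move=> h; rewrite -(pmulr_rgt0 _ (addr_gt0 a0 b0)) RmE.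
  by apply: (lt_le_trans (mulr_gt0 a0 h)); rewrite lerDl mulr_ge0 // ltW.
have BR a : 0 < B a -> 0 < Rm a.
  move=> h; rewrite -(pmulr_rgt0 _ (addr_gt0 a0 b0)) RmE.
  by apply: (lt_le_trans (mulr_gt0 b0 h)); rewrite lerDr mulr_ge0 // ltW.
have nAR : ~~ [exists a, (0 < A a) && (Rm a == 0)].
  by apply/existsPn => b; apply/negP => /andP[h /eqP e]; move: (AR b h); rewrite e ltxx.
have nBR : ~~ [exists a, (0 < B a) && (Rm a == 0)].
  by apply/existsPn => b; apply/negP => /andP[h /eqP e]; move: (BR b h); rewrite e ltxx.
rewrite /GJS -/Rm !KLE (negbTE nAR) (negbTE nBR).
rewrite ifF; last by apply/negbTE/existsPn.
rewrite ifF; last by apply/negbTE/existsPn.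
rewrite -!EFinM -!EFinD lee_fin.
rewrite -subr_ge0 !mulr_sumr -!big_split -sumrB /=.
have P1' : \sum_a P a <= 1 by rewrite P1.
have G := gibbs dR P0 P1' RP.
have : 0 <= (al + be) * \sum_a kterm Rm P a by rewrite mulr_ge0 // ltW // addr_gt0.
rewrite mulr_sumr; move/le_trans; apply; rewrite le_eqVlt; apply/orP; left; apply/eqP.
apply: eq_bigr => a _.
rewrite (kterm_eq (R0 a) (@RP a)) (kterm_eq (A0 a) (@AP a)) (kterm_eq (B0 a) (@BP a)).
rewrite (kterm_eq (A0 a) (@AR a)) (kterm_eq (B0 a) (@BR a)).
rewrite mulrA RmE; ring.
Qed.

Definition cnt (X : finType) (n : nat) (x : {ffun 'I_n -> X}) (a : X) : nat :=
  #|[set k | x k == a]|.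

Lemma sum_by_value (R : realType) (X : finType) (n : nat) (x : {ffun 'I_n -> X})
   (g : X -> R) :
  \sum_(k < n) g (x k) = \sum_a (cnt x a)%:R * g a.
Proof.
rewrite (partition_big (fun k => x k) predT) //=.
apply: eq_bigr => a _.
rewrite (eq_bigr (fun _ => g a)); last by move=> k /eqP ->.
by rewrite sumr_const /cnt cardsE mulr_natl.
Qed.

Lemma etypeE (R : realType) (X : finType) (n : nat) (x : {ffun 'I_n -> X}) a :
  etype R x a = (cnt x a)%:R / n%:R.
Proof. by rewrite /etype ffunE. Qed.

Lemma cnt_etype (R : realType) (X : finType) (n : nat) (x : {ffun 'I_n -> X}) a :
  (0 < n)%N -> (cnt x a)%:R = n%:R * etype R x a.
Proof.
move=> n0; rewrite etypeE mulrC divfK //; by rewrite pnatr_eq0 -lt0n.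
Qed.

Lemma etype_dist (R : realType) (X : finType) (n : nat) (x : {ffun 'I_n -> X}) :
  (0 < n)%N -> is_dist (etype R x).
Proof.
move=> n0; split; first by move=> a; rewrite etypeE divr_ge0.
have := sum_by_value x (fun _ => (1 : R)).
rewrite sumr_const card_ord => h.
under eq_bigr do rewrite etypeE.
rewrite -mulr_suml (eq_bigr (fun a => (cnt x a)%:R * 1)); last by move=> *; rewrite mulr1.
by rewrite -h divff // pnatr_eq0 -lt0n.
Qed.

Lemma etype_pos (R : realType) (X : finType) (n : nat) (x : {ffun 'I_n -> X}) k :
  0 < etype R x (x k).
Proof.
rewrite etypeE divr_gt0 // ltr0n.
  by apply/card_gt0P; exists k; rewrite inE.
exact: (leq_ltn_trans (leq0n k) (ltn_ord k)).
Qed.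

Lemma prod_type0 (R : realType) (X : finType) (n : nat) (x : {ffun 'I_n -> X})
   (P : {ffun X -> R}) :
  [exists a, (0 < etype R x a) && (P a == 0)] -> \prod_(k < n) P (x k) = 0.
Proof.
case/existsP => a /andP[Ta /eqP Pa].
have : (0 < cnt x a)%N.
  by move: Ta; rewrite etypeE lt0n; apply: contraTT; rewrite negbK => /eqP ->; rewrite mul0r ltxx.
case/card_gt0P => k; rewrite inE => /eqP xk.
by apply/eqP/prodf_eq0; exists k => //; rewrite xk Pa.
Qed.

Lemma prod_type (R : realType) (X : finType) (n : nat) (x : {ffun 'I_n -> X})
   (P : {ffun X -> R}) : (0 < n)%N ->
  (forall a, 0 < etype R x a -> 0 < P a) ->
  \prod_(k < n) P (x k) =
  \prod_(k < n) etype R x (x k) * expR (- (n%:R * \sum_a kterm (etype R x) P a)).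
Proof.
move=> n0 TP.
set T := etype R x.
have T0 a : 0 <= T a by rewrite /T etypeE divr_ge0.
pose g a := ln (P a) - ln (T a).
have e k : P (x k) = T (x k) * expR (g (x k)).
  have Tp := etype_pos R x k; have Pp := TP _ Tp.
  rewrite /g -ln_div ?posrE // lnK ?posrE ?divr_gt0 //.
  by rewrite mulrC divfK // gt_eqF.
rewrite (eq_bigr _ (fun k _ => e k)) big_split /= -expR_sum.
congr (_ * expR _).
rewrite sum_by_value mulr_sumr -sumrN; apply: eq_bigr => a _.
rewrite cnt_etype // kterm_eq //; last exact: TP.
rewrite /g; ring.
Qed.

Definition cntv (X : finType) (n : nat) (x : {ffun 'I_n -> X}) : {ffun X -> 'I_n.+1} :=
  [ffun a => inord (cnt x a)].

Lemma cnt_le (X : finType) (n : nat) (x : {ffun 'I_n -> X}) a : (cnt x a <= n)%N.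
Proof. by rewrite /cnt; apply: leq_trans (max_card _) _; rewrite card_ord. Qed.

Lemma cntv_etype (R : realType) (X : finType) (n : nat) (x y : {ffun 'I_n -> X}) :
  cntv x = cntv y -> etype R x = etype R y.
Proof.
move=> e; apply/ffunP => a; rewrite !etypeE.
have := congr1 (fun f : {ffun X -> 'I_n.+1} => nat_of_ord (f a)) e; rewrite /cntv !ffunE /=.
by rewrite !inordK ?ltnS ?cnt_le // => ->.
Qed.

Lemma sum_type_le (R : realType) (X : finType) (n : nat) : (0 < n)%N ->
  \sum_(s : {ffun 'I_n -> X}) \prod_(k < n) etype R s (s k) <= (n.+1 ^ #|X|)%:R.
Proof.
move=> n0.
rewrite (partition_big (@cntv X n) predT) //=.
have -> : ((n.+1 ^ #|X|)%:R : R) = \sum_(c : {ffun X -> 'I_n.+1}) 1.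
  by rewrite sumr_const card_ffun card_ord.
apply: ler_sum => c _.
case: (pickP (fun s => cntv s == c)) => [s0 /eqP e0|none]; last first.
  by rewrite big_pred0 // => s; rewrite none.
rewrite (eq_bigr (fun s : {ffun 'I_n -> X} => \prod_(k < n) etype R s0 (s k))); last first.
  by move=> s /eqP es; rewrite (cntv_etype R (y := s0)) // es.
have [T0 T1] := etype_dist R s0 n0.
apply: le_trans (_ : \sum_(s : {ffun 'I_n -> X}) \prod_(k < n) etype R s0 (s k) <= _).
  rewrite [X in _ <= X](bigID (fun s => cntv s == c)) /= lerDl.
  by apply: sumr_ge0 => s _; apply: prodr_ge0 => k _.
rewrite -(bigA_distr_bigA (fun (k : 'I_n) (a : X) => etype R s0 a)) /=.
by rewrite big1.
Qed.

Lemma KL_fin (R : realType) (X : finType) (T P : {ffun X -> R}) :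
  ~~ [exists a, (0 < T a) && (P a == 0)] -> KL T P = (\sum_a kterm T P a)%:E.
Proof. by rewrite KLE => /negbTE ->. Qed.

Lemma TP_of (R : realType) (X : finType) (T P : {ffun X -> R}) :
  is_dist P -> ~~ [exists a, (0 < T a) && (P a == 0)] -> forall a, 0 < T a -> 0 < P a.
Proof.
move=> [P0 _] /existsPn h a Ta; move: (h a); rewrite Ta /= lt_def => ->; exact: P0.
Qed.

Lemma sprob_bound (R : realType) (X : finType) (M1 M2 n1 n2 N : nat) (al be c : R)
  (P : 'I_M1 -> {ffun X -> R}) (Q : 'I_M2 -> {ffun X -> R})
  (A : sampleX X M1 n1 -> sampleY X M2 n2 -> Prop) :
  0 < al -> 0 < be -> (0 < n1)%N -> (0 < n2)%N ->
  al * N%:R <= n1%:R -> be * N%:R <= n2%:R ->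
  (forall i, is_dist (P i)) -> (forall j, is_dist (Q j)) ->
  (forall x y, A x y -> (c%:E <= Eexp P Q (fun i => etype R (x i))
                                   (fun j => etype R (y j)) al be)%E) ->
  sprob P Q A <= ((n1.+1 ^ #|X|) ^ M1 * (n2.+1 ^ #|X|) ^ M2)%:R * expR (- (N%:R * c)).
Proof.
move=> a0 b0 n10 n20 hn1 hn2 dP dQ HA.
pose V1 (s : {ffun 'I_n1 -> X}) := \prod_(k < n1) etype R s (s k).
pose V2 (s : {ffun 'I_n2 -> X}) := \prod_(k < n2) etype R s (s k).
have V10 s : 0 <= V1 s by apply: prodr_ge0 => k _; apply: ltW; apply: etype_pos.
have V20 s : 0 <= V2 s by apply: prodr_ge0 => k _; apply: ltW; apply: etype_pos.
set E := expR (- (N%:R * c)).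
have E0 : 0 <= E by apply: ltW; apply: expR_gt0.
have pt (x : sampleX X M1 n1) (y : sampleY X M2 n2) :
  (if `[< A x y >] then
        (\prod_(i < M1) \prod_(k < n1) P i (x i k)) *
        (\prod_(j < M2) \prod_(k < n2) Q j (y j k))
      else 0) <= (\prod_i V1 (x i) * \prod_j V2 (y j)) * E.
  case: (asboolP (A x y)) => [HAxy|_]; last by rewrite mulr_ge0 // mulr_ge0 // prodr_ge0.
  have Hc := HA x y HAxy.
  case: (boolP [exists i, [exists a, (0 < etype R (x i) a) && (P i a == 0)]]).
    case/existsP => i hi.
    rewrite (_ : \prod_(i < M1) _ = 0) ?mul0r ?mulr_ge0 ?prodr_ge0 //.
    by apply/eqP/prodf_eq0; exists i => //; rewrite prod_type0.
  move/existsPn => hP.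
  case: (boolP [exists j, [exists a, (0 < etype R (y j) a) && (Q j a == 0)]]).
    case/existsP => j hj.
    rewrite (_ : \prod_(j < M2) _ = 0) ?mulr0 ?mulr_ge0 ?prodr_ge0 //.
    by apply/eqP/prodf_eq0; exists j => //; rewrite prod_type0.
  move/existsPn => hQ.
  pose d i := \sum_a kterm (etype R (x i)) (P i) a.
  pose d' j := \sum_a kterm (etype R (y j)) (Q j) a.
  have d0 i : 0 <= d i.
    apply: gibbs; first exact: etype_dist.
    - by case: (dP i).
    - by case: (dP i) => _ ->.
    - exact: TP_of (dP i) (hP i).
  have d'0 j : 0 <= d' j.
    apply: gibbs; first exact: etype_dist.
    - by case: (dQ j).
    - by case: (dQ j) => _ ->.
    - exact: TP_of (dQ j) (hQ j).
  have HE : Eexp P Q (fun i => etype R (x i)) (fun j => etype R (y j)) al be =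
            (\sum_i al * d i + \sum_j be * d' j)%:E.
    rewrite /Eexp EFinD -!sumEFin; congr (_ + _)%E; apply: eq_bigr => i _;
      by rewrite KL_fin // EFinM.
  move: Hc; rewrite HE lee_fin => Hc.
  rewrite (eq_bigr (fun i => V1 (x i) * expR (- (n1%:R * d i)))); last first.
    by move=> i _; rewrite prod_type //; exact: TP_of (dP i) (hP i).
  rewrite (eq_bigr (fun j => V2 (y j) * expR (- (n2%:R * d' j))) (P := xpredT)); last first.
    by move=> j _; rewrite prod_type //; exact: TP_of (dQ j) (hQ j).
  rewrite !big_split /= -!expR_sum.
  rewrite mulrACA ler_wpM2l ?mulr_ge0 ?prodr_ge0 // -expRD ler_expR.
  rewrite !sumrN -opprD lerN2.
  apply: (le_trans (y := N%:R * (\sum_i al * d i + \sum_j be * d' j))).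
    by rewrite ler_wpM2l.
  rewrite mulrDr !mulr_sumr; apply: lerD; apply: ler_sum => i _;
    rewrite mulrA ler_wpM2r // mulrC //.
apply: (le_trans (y := \sum_(x : sampleX X M1 n1) \sum_(y : sampleY X M2 n2)
                     (\prod_i V1 (x i) * \prod_j V2 (y j)) * E)).
  by apply: ler_sum => x _; apply: ler_sum => y _; exact: pt.
rewrite (_ : \sum_(x : sampleX X M1 n1) _ = (\sum_(x : sampleX X M1 n1) \sum_(y : sampleY X M2 n2)
                     (\prod_i V1 (x i) * \prod_j V2 (y j))) * E); last first.
  by rewrite mulr_suml; apply: eq_bigr => x _; rewrite mulr_suml.
apply: ler_wpM2r => //.
rewrite (eq_bigr (fun x : sampleX X M1 n1 => \prod_i V1 (x i) * \sum_(y : sampleY X M2 n2) \prod_j V2 (y j))); last first.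
  by move=> x _; rewrite mulr_sumr.
rewrite -mulr_suml natrM; apply: ler_pM.
- by apply: sumr_ge0 => x _; exact: prodr_ge0.
- by apply: sumr_ge0 => y _; exact: prodr_ge0.
- rewrite /sampleX -(bigA_distr_bigA (fun (i : 'I_M1) (s : {ffun 'I_n1 -> X}) => V1 s)) /=.
  rewrite natrX (_ : _ ^+ M1 = \prod_(i < M1) ((n1.+1 ^ #|X|)%:R : R)); last by rewrite prodr_const card_ord.
  by apply: ler_prod => i _; rewrite sumr_ge0 //= sum_type_le.
- rewrite /sampleY -(bigA_distr_bigA (fun (j : 'I_M2) (s : {ffun 'I_n2 -> X}) => V2 s)) /=.
  rewrite natrX (_ : _ ^+ M2 = \prod_(i < M2) ((n2.+1 ^ #|X|)%:R : R)); last by rewrite prodr_const card_ord.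
  by apply: ler_prod => j _; rewrite sumr_ge0 //= sum_type_le.
Qed.

Lemma liminf_ge (R : realType) (u : nat -> \bar R) (t : \bar R) (g : nat -> R) :
  (forall e, 0 < e -> exists N0, forall N, (N0 <= N)%N -> g N <= e) ->
  (forall c, (c%:E <= t)%E -> forall N, (0 < N)%N -> ((c - g N)%:E <= u N)%E) ->
  (t <= limn_einf u)%E.
Proof.
move=> hg hu.
have LE : limn_einf u = ereal_sup (range (einfs u)).
  by rewrite limn_einf_lim; apply: cvg_lim => //; exact: cvg_einfs_sup.
have claim c : (c%:E <= t)%E -> (c%:E <= limn_einf u)%E.
  move=> ct; apply/lee_subgt0Pr => e e0.
  have [N0 HN0] := hg e e0.
  set N1 := maxn N0 1.
  rewrite LE; apply: (le_trans _ (ereal_sup_ubound _)); last by exists N1.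
  apply/ereal_infP => _ [k /= Hk <-].
  have kpos : (0 < k)%N by apply: leq_trans Hk; rewrite leq_maxr.
  have k0 : (N0 <= k)%N by apply: leq_trans Hk; rewrite leq_maxl.
  apply: le_trans (hu c ct k kpos).
  by rewrite -EFinB lee_fin lerB // HN0.
case: t claim {hu} => [r| |] claim.
- exact: claim.
- case E : (limn_einf u) => [r| |] //.
  + have := claim (r + 1) (leey _); rewrite E lee_fin => h.
    have : (r + 1 <= r) = false by apply/negbTE; rewrite -ltNge ltrDl ltr01.
    by rewrite h.
  + by have := claim 0 (leey _); rewrite E.
- exact: leNye.
Qed.

Lemma expo_ge (R : realType) (p C c : R) (N : nat) :
  0 <= p -> 1 <= C -> (0 < N)%N -> p <= C * expR (- (N%:R * c)) ->
  ((c - ln C / N%:R)%:E <= expo p N)%E.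
Proof.
move=> p0 C1 N0 hp; rewrite /expo; case: eqP => [_|/eqP pn0]; first exact: leey.
have pp : 0 < p by rewrite lt_def pn0.
have Cp : 0 < C by apply: lt_le_trans C1.
have : ln p <= ln C - N%:R * c.
  rewrite -(expRK (- (N%:R * c))) -lnM ?posrE ?expR_gt0 //.
  by rewrite ler_ln ?posrE ?mulr_gt0 ?expR_gt0.
move=> h; rewrite lee_fin.
have Np : 0 < (N%:R : R) by rewrite ltr0n.
rewrite ler_pdivlMr // mulrBl divfK ?gt_eqF //; lra.
Qed.

Lemma ln_lin (R : realType) (gm : R) : 0 < gm ->
  forall e, 0 < e -> exists N0, forall N, (N0 <= N)%N -> (0 < N)%N ->
    ln (gm * N%:R) / N%:R <= e.
Proof.
move=> g0 e e0.
exists `|Num.ceil (2 * gm / (e * e))|%N => N hN0 N0.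
have Np : 0 < (N%:R : R) by rewrite ltr0n.
set y := gm * N%:R.
have yp : 0 < y by rewrite mulr_gt0.
case: (lerP (ln y) 0) => hy.
  by apply: le_trans (ltW e0); rewrite pmulr_lle0 // invr_gt0.
have h := expR_ge1Dxn 1 (ltW hy); rewrite lnK ?posrE // in h.
rewrite (_ : (1 + 1)`!%:R = 2 :> R) in h; last by [].
have hN : 2 * gm / (e * e) <= N%:R.
  apply: (le_trans (ceil_ge _)).
  apply: (le_trans (y := (`|Num.ceil (2 * gm / (e * e))|%:~R))).
    by rewrite ler_int ler_norm.
  by rewrite -natr_absz ler_nat.
move: hN; rewrite ler_pdivrMr ?mulr_gt0 // => hN.
rewrite ler_pdivrMr //.
set L := ln y in hy h *; set n := (N%:R : R) in Np hN h *.
rewrite /y in h.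
have h1 : L ^+ 2 <= 2 * (gm * n) by rewrite -/n in h; lra.
have h2 : 2 * gm * n <= n * e * e * n by nra.
have h3 : L * L <= (e * n) * (e * n) by rewrite expr2 in h1; nra.
have en0 : 0 < e * n by rewrite mulr_gt0.
rewrite leNgt; apply/negP => H.
have : (e * n) * (e * n) < L * L by apply: ltr_pM => //; apply: ltW.
by rewrite ltNge h3.
Qed.

Lemma sub_match (M1 M2 : nat) (m m' : {set 'I_M1 * 'I_M2}) :
  is_match m -> m' \subset m -> is_match m'.
Proof.
move=> /forallP hm sub; apply/forallP => p; apply/implyP => pm'.
apply/forallP => q; apply/implyP => qm'.
have := hm p; move/implyP/(_ (fintype.subsetP sub p pm'))/forallP/(_ q).
by move/implyP/(_ (fintype.subsetP sub q qm')).
Qed.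

Lemma match_inj1 (M1 M2 : nat) (m : {set 'I_M1 * 'I_M2}) :
  is_match m -> {in m &, injective (fun p => p.1)}.
Proof.
move=> /forallP hm p q pm qm e.
have := hm p; move/implyP/(_ pm)/forallP/(_ q)/implyP/(_ qm).
by rewrite e eqxx /= => /eqP.
Qed.

Lemma match_inj2 (M1 M2 : nat) (m : {set 'I_M1 * 'I_M2}) :
  is_match m -> {in m &, injective (fun p => p.2)}.
Proof.
move=> /forallP hm p q pm qm e.
have := hm p; move/implyP/(_ pm)/forallP/(_ q)/implyP/(_ qm).
by rewrite e eqxx orbT => /eqP.
Qed.

Lemma exists_other (T : finType) (m' m0 : {set T}) :
  m' != m0 -> (0 < #|m'|)%N -> (#|m'| <= #|m0|)%N ->
  exists m'' : {set T}, [/\ m'' \subset m0, #|m''| = #|m'| & m'' != m'].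
Proof.
move=> ne c0 cle.
case: (boolP (m' \subset m0)) => sub.
  have pr : m' \proper m0 by rewrite finset.properEneq ne.
  have [_ [p pm0 pm']] := fintype.properP pr.
  case/card_gt0P: c0 => q qm'.
  exists (p |: (m' :\ q)); split.
  - by rewrite finset.subUset finset.sub1set pm0 (fintype.subset_trans (finset.subD1set _ _) sub).
  - rewrite cardsU1 !inE (negbTE pm') andbF /=.
    by rewrite (cardsD1 q m') qm'.
  - apply/eqP => e; move: pm'; rewrite -e !inE eqxx //.
pose s := take #|m'| (enum m0).
exists [set x in s]; split.
- by apply/fintype.subsetP => x; rewrite inE => /mem_take; rewrite mem_enum.
- rewrite cardsE.
  have u : uniq s by rewrite take_uniq ?enum_uniq.
  rewrite (card_uniqP u).
  by rewrite size_takel // -cardE.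
- apply: contraNneq sub => <-; apply/fintype.subsetP => x; rewrite inE => /mem_take.
  by rewrite mem_enum.
Qed.

Lemma sum_fst_le (R : realType) (M1 M2 : nat) (m : {set 'I_M1 * 'I_M2})
  (f : 'I_M1 -> \bar R) :
  is_match m -> (forall i, (0 <= f i)%E) ->
  (\sum_(p in m) f p.1 <= \sum_i f i)%E.
Proof.
move=> hm f0.
rewrite -(big_imset _ (match_inj1 hm)) /= big_mkcond /=.
by apply: lee_sum => i _; case: ifP.
Qed.

Lemma sum_snd_le (R : realType) (M1 M2 : nat) (m : {set 'I_M1 * 'I_M2})
  (f : 'I_M2 -> \bar R) :
  is_match m -> (forall i, (0 <= f i)%E) ->
  (\sum_(p in m) f p.2 <= \sum_i f i)%E.
Proof.
move=> hm f0.
rewrite -(big_imset _ (match_inj2 hm)) /= big_mkcond /=.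
by apply: lee_sum => i _; case: ifP.
Qed.

Lemma Gm_le_Eexp (R : realType) (X : finType) (M1 M2 : nat) (al be : R)
  (m0 m : {set 'I_M1 * 'I_M2})
  (P : 'I_M1 -> {ffun X -> R}) (Q : 'I_M2 -> {ffun X -> R})
  (Om : 'I_M1 -> {ffun X -> R}) (Ps : 'I_M2 -> {ffun X -> R}) :
  0 < al -> 0 < be ->
  (forall i, is_dist (P i)) -> (forall j, is_dist (Q j)) ->
  (forall i, is_dist (Om i)) -> (forall j, is_dist (Ps j)) ->
  in_Pm m0 P Q -> is_match m0 -> m \subset m0 ->
  (Gm m Om Ps al be <= Eexp P Q Om Ps al be)%E.
Proof.
move=> a0 b0 dP dQ dO dS hPm hm0 sub.
have hm := sub_match hm0 sub.
rewrite /Gm /Eexp.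
apply: (le_trans (y := (\sum_(p in m) (al%:E * KL (Om p.1) (P p.1) +
                                      be%:E * KL (Ps p.2) (Q p.2)))%E)).
  apply: lee_sum => p pm.
  have e : P p.1 = Q p.2 by apply/hPm; rewrite -surjective_pairing (fintype.subsetP sub).
  by rewrite -e; apply: gjs_le.
rewrite big_split /=; apply: leeD.
  apply: (sum_fst_le (f := fun i => (al%:E * KL (Om i) (P i))%E) hm) => i.
  by apply: mule_ge0; [rewrite lee_fin ltW | exact: KL_ge0].
apply: (sum_snd_le (f := fun j => (be%:E * KL (Ps j) (Q j))%E) hm) => j.
by apply: mule_ge0; [rewrite lee_fin ltW | exact: KL_ge0].
Qed.

Lemma ceiln_props (R : realType) (a : R) (N : nat) : 0 < a -> (0 < N)%N ->
  [/\ (0 < ceiln a N)%N, a * N%:R <= (ceiln a N)%:R & (ceiln a N)%:R <= a * N%:R + 1].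
Proof.
move=> a0 N0.
have Np : 0 < (N%:R : R) by rewrite ltr0n.
have z0 : 0 <= Num.ceil (a * N%:R) by rewrite ceil_ge0 (lt_trans _ (mulr_gt0 a0 Np)) // ltrN10.
have E : ((ceiln a N)%:R : R) = (Num.ceil (a * N%:R))%:~R.
  by rewrite /ceiln natr_absz ger0_norm.
have h1 : a * N%:R <= (ceiln a N)%:R by rewrite E ceil_ge.
split => //.
- by rewrite -(ltr0n R); apply: lt_le_trans h1; rewrite mulr_gt0.
- have := ceil_itv (a * N%:R); rewrite E => /andP[h _].
  by move: h; rewrite intrD => h; apply: ltW; rewrite -ltrBlDr.
Qed.

Lemma sprob_ge0 (R : realType) (X : finType) (M1 M2 n1 n2 : nat)
  (P : 'I_M1 -> {ffun X -> R}) (Q : 'I_M2 -> {ffun X -> R})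
  (A : sampleX X M1 n1 -> sampleY X M2 n2 -> Prop) :
  (forall i, is_dist (P i)) -> (forall j, is_dist (Q j)) -> 0 <= sprob P Q A.
Proof.
move=> dP dQ; apply: sumr_ge0 => x _; apply: sumr_ge0 => y _.
case: ifP => // _; apply: mulr_ge0; apply: prodr_ge0 => i _; apply: prodr_ge0 => k _.
  by case: (dP i).
by case: (dQ i).
Qed.

Lemma final (R : realType) (X : finType) (M1 M2 : nat) (al be : R)
  (P : 'I_M1 -> {ffun X -> R}) (Q : 'I_M2 -> {ffun X -> R}) (t : \bar R)
  (A : forall N, sampleX X M1 (ceiln al N) -> sampleY X M2 (ceiln be N) -> Prop) :
  0 < al -> 0 < be ->
  (forall i, is_dist (P i)) -> (forall j, is_dist (Q j)) ->
  (forall N, (0 < N)%N -> forall x y, A N x y ->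
     (t <= Eexp P Q (fun i => etype R (x i)) (fun j => etype R (y j)) al be)%E) ->
  (t <= limn_einf (fun N => expo (sprob P Q (A N)) N))%E.
Proof.
move=> a0 b0 dP dQ HA.
pose C N : nat := (((ceiln al N).+1 ^ #|X|) ^ M1 * ((ceiln be N).+1 ^ #|X|) ^ M2)%N.
apply: (liminf_ge (g := fun N => ln (C N)%:R / N%:R)).
  move=> e e0.
  set K := (#|X| * M1 + #|X| * M2)%N.
  set gm := al + be + 2.
  have gm0 : 0 < gm by rewrite /gm; lra.
  have K0 : 0 < (K%:R : R) + 1 by rewrite ltr_wpDl // ler0n.
  have [N0 H0] := ln_lin gm0 (divr_gt0 e0 K0).
  exists (maxn N0 1) => N hN.
  have Npos : (0 < N)%N by apply: leq_trans hN; rewrite leq_maxr.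
  have NN0 : (N0 <= N)%N by apply: leq_trans hN; rewrite leq_maxl.
  have Np : 0 < (N%:R : R) by rewrite ltr0n.
  have [_ _ u1] := ceiln_props a0 Npos.
  have [_ _ u2] := ceiln_props b0 Npos.
  have N1 : 1 <= (N%:R : R) by rewrite ler1n.
  have b1 : ((ceiln al N).+1%:R : R) <= gm * N%:R.
    rewrite -addn1 natrD /gm; nra.
  have b2 : ((ceiln be N).+1%:R : R) <= gm * N%:R.
    rewrite -addn1 natrD /gm; nra.
  have gN : 0 < gm * N%:R by rewrite mulr_gt0.
  have CC : ((C N)%:R : R) <= (gm * N%:R) ^+ K.
    rewrite /C natrM !natrX -!exprM /K exprD.
    apply: ler_pM; rewrite ?exprn_ge0 ?ler0n //.
      by apply: lerXn2r => //; rewrite nnegrE ?ler0n ?ltW.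
    by apply: lerXn2r => //; rewrite nnegrE ?ler0n ?ltW.
  have Cp : (0 < C N)%N by rewrite /C muln_gt0 !expn_gt0.
  have lnC : ln (C N)%:R <= K%:R * ln (gm * N%:R).
    rewrite mulr_natl -lnXn //; rewrite ler_ln ?posrE ?ltr0n ?exprn_gt0 //.
  have hl := H0 N NN0 Npos.
  have lg0 : 0 <= ln (gm * N%:R).
    by apply: ln_ge0; rewrite /gm; nra.
  apply: (le_trans (y := K%:R * (ln (gm * N%:R) / N%:R))).
    by rewrite mulrA; apply: ler_wpM2r => //; rewrite invr_ge0 ltW.
  apply: (le_trans (y := K%:R * (e / (K%:R + 1)))).
    by rewrite ler_wpM2l ?ler0n.
  rewrite mulrA ler_pdivrMr //; nra.
move=> c ct N N0.
have [p1 l1 _] := ceiln_props a0 N0.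
have [p2 l2 _] := ceiln_props b0 N0.
apply: expo_ge => //.
- exact: sprob_ge0.
- by rewrite ler1n /C muln_gt0 !expn_gt0.
apply: (sprob_bound (al := al) (be := be)) => //.
move=> x y h; exact: le_trans ct (HA N N0 x y h).
Qed.

Theorem theorem5 (R : realType) (X : finType) (M1 M2 : nat)
  (alpha beta l1 l2 : R) :
  (1 <= M2)%N -> (M2 <= M1)%N ->
  0 < alpha -> 0 < beta -> 0 < l1 -> 0 < l2 ->
  (* (i) false alarm under the null hypothesis *)
  (forall (P : 'I_M1 -> {ffun X -> R}) (Q : 'I_M2 -> {ffun X -> R}),
     valid_model P Q -> in_P0 P Q ->
     (Er alpha beta l1 P Q <=
        limn_einf (fun N => expo (eta_err alpha beta l1 l2 P Q N) N))%E) /\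
  (* (ii) mismatch and false reject under H_l^K (m0 is the K-match M_l^K) *)
  (forall (m0 : {set 'I_M1 * 'I_M2})
          (P : 'I_M1 -> {ffun X -> R}) (Q : 'I_M2 -> {ffun X -> R}),
     in_calM m0 -> valid_model P Q -> in_Pm m0 P Q ->
     (Order.min (Gfun alpha beta l1 #|m0| P Q) l2%:E <=
        limn_einf (fun N => expo (beta_err alpha beta l1 l2 m0 P Q N) N))%E /\
     (Order.min (Order.min l1%:E l2%:E)
        (Order.min (Gfun alpha beta l1 #|m0| P Q) (Ffun alpha beta l2 #|m0| P Q)) <=
        limn_einf (fun N => expo (zeta_err alpha beta l1 l2 P Q N) N))%E).
Proof.
move=> _ _ a0 b0 l10 l20; split.
  move=> P Q [dP dQ _ _] _.
  apply: (final (A := fun N (x : sampleX X M1 (ceiln alpha N)) (y : sampleY X M2 (ceiln beta N)) =>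
      exists m, in_calM m /\ decides alpha beta l1 l2 m x y)) => //.
  move=> N N0 x y [m [cm [[Sle _] _]]].
  have [p1 _ _] := ceiln_props a0 N0; have [p2 _ _] := ceiln_props b0 N0.
  apply: ge_ereal_inf; exists (Eexp P Q (fun i => etype R (x i)) (fun j => etype R (y j)) alpha beta) => //.
  exists m, (fun i => etype R (x i)), (fun j => etype R (y j)); split => //.
  - by move=> i; apply: etype_dist.
  - by move=> j; apply: etype_dist.
move=> m0 P Q cm0 [dP dQ _ _] hPm.
have /andP[hm0 K0] := cm0.
split.
  apply: (final (A := fun N (x : sampleX X M1 (ceiln alpha N)) (y : sampleY X M2 (ceiln beta N)) =>
      exists m, [/\ in_calM m, m <> m0 & decides alpha beta l1 l2 m x y])) => //.
  move=> N N0 x y [m [cm mne [[Sle Bo] _]]].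
  have [p1 _ _] := ceiln_props a0 N0; have [p2 _ _] := ceiln_props b0 N0.
  have dO i : is_dist (etype R (x i)) by apply: etype_dist.
  have dS j : is_dist (etype R (y j)) by apply: etype_dist.
  case: (ltnP #|m0| #|m|) => hc.
    rewrite ge_min; apply/orP; left.
    apply: ge_ereal_inf; exists (Eexp P Q (fun i => etype R (x i)) (fun j => etype R (y j)) alpha beta) => //.
    exists m, (fun i => etype R (x i)), (fun j => etype R (y j)); split => //.
    by rewrite cm.
  rewrite ge_min; apply/orP; right.
  have /andP[hm mpos] := cm.
  have [m'' [sub c'' ne'']] := exists_other (introN eqP mne) mpos hc.
  have hm'' := sub_match hm0 sub.
  have := Bo m'' hm'' c'' (elimN eqP ne'') => /ltW h.
  apply: (le_trans h).
  exact: (Gm_le_Eexp a0 b0 dP dQ dO dS hPm hm0 sub).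
apply: (final (A := fun N (x : sampleX X M1 (ceiln alpha N)) (y : sampleY X M2 (ceiln beta N)) =>
    ~ exists m, in_calM m /\ decides alpha beta l1 l2 m x y)) => //.
move=> N N0 x y hnd.
have [p1 _ _] := ceiln_props a0 N0; have [p2 _ _] := ceiln_props b0 N0.
have dO i : is_dist (etype R (x i)) by apply: etype_dist.
have dS j : is_dist (etype R (y j)) by apply: etype_dist.
set Om := fun i => etype R (x i).
set Ps := fun j => etype R (y j).
set EE := Eexp P Q Om Ps alpha beta.
have Gle (m : {set 'I_M1 * 'I_M2}) : m \subset m0 -> (Gm m Om Ps alpha beta <= EE)%E.
  by move=> sub; exact: (Gm_le_Eexp a0 b0 dP dQ dO dS hPm hm0 sub).
have l2le : (l2%:E <= EE)%E -> (Order.min (Order.min l1%:E l2%:E)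
        (Order.min (Gfun alpha beta l1 #|m0| P Q) (Ffun alpha beta l2 #|m0| P Q)) <= EE)%E.
  by move=> h; rewrite ge_min ge_min h orbT.
have Gle2 (m' : {set 'I_M1 * 'I_M2}) : in_calM m' -> (#|m0| < #|m'|)%N -> (Sstat alpha beta m' x y <= l1%:E)%E ->
   (Order.min (Order.min l1%:E l2%:E)
        (Order.min (Gfun alpha beta l1 #|m0| P Q) (Ffun alpha beta l2 #|m0| P Q)) <= EE)%E.
  move=> cm' hc Sle; rewrite ge_min; apply/orP; right; rewrite ge_min; apply/orP; left.
  apply: ge_ereal_inf; exists EE => //.
  exists m', Om, Ps; split => //.
  by rewrite cm'.
have [hB|hB] := pselect (Bev alpha beta l1 l2 m0 x y).
  have [[m' [cm' ne' B']]|nex] := pselect (exists m', [/\ in_calM m', m' <> m0 & Bev alpha beta l1 l2 m' x y]); last first.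
    exfalso; apply: hnd; exists m0; split => //; split => // m' cm' ne' B'.
    by apply: nex; exists m'.
  have [Sle Bo] := B'.
  case: (ltnP #|m0| #|m'|) => hc; first exact: Gle2 cm' hc Sle.
  have /andP[hm mpos] := cm'.
  have [m'' [sub c'' ne'']] := exists_other (introN eqP ne') mpos hc.
  have hm'' := sub_match hm0 sub.
  have := Bo m'' hm'' c'' (elimN eqP ne'') => /ltW h.
  by apply: l2le; apply: (le_trans h); apply: Gle.
have [S0|S0] := pselect (Sstat alpha beta m0 x y <= l1%:E)%E; last first.
  rewrite ge_min; apply/orP; left; rewrite ge_min; apply/orP; left.
  move/negP: S0; rewrite -ltNge => /ltW h; apply: (le_trans h); exact: Gle.
have [[m' [hm' c' ne' S']]|nex] := pselect (exists m' : {set 'I_M1 * 'I_M2},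
   [/\ is_match m', #|m'| = #|m0|, m' <> m0 & (Sstat alpha beta m' x y <= l2%:E)%E]); last first.
  exfalso; apply: hB; split => // m' hm' c' ne'.
  rewrite ltNge; apply/negP => S'; apply: nex; exists m'; split => //.
have [S2|S2] := pselect (Sstat alpha beta m0 x y <= l2%:E)%E; last first.
  apply: l2le; move/negP: S2; rewrite -ltNge => /ltW h; apply: (le_trans h); exact: Gle.
rewrite ge_min; apply/orP; right; rewrite ge_min; apply/orP; right.
apply: ge_ereal_inf; exists EE => //.
exists m0, m', Om, Ps; split => //.
by rewrite hm0 hm' c' eqxx /=; apply/eqP => e; apply: ne'.
Qed.
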